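(* Let $K$ be a field, $R=\bigoplus_{m\ge0}R_m$ an $\mathbb N$-graded $K$-algebra and let $A$ be a graded right double Ore extension of $R$ with generators $x_1,x_2$, relation $x_2x_1=p_{12}x_1x_2+p_{11}x_1^2+\tau_1x_1+\tau_2x_2+\tau_0$, and maps $\sigma=(\sigma_{ij})$, $\delta=(\delta_1,\delta_2)^T$. If $p_{11}=0$, $p_{12}\neq0$, $\sigma_{12}=\sigma_{21}=0$, and $\sigma_{11},\sigma_{22}$ are automorphisms of $R$, then $A$ is a graded skew PBW extension of $R$.
   Context: A $K$-algebra $B\supseteq R$ is a right double Ore extension of $R$ if: it is generated by $R$ and $x_1,x_2$; $x_2x_1=p_{12}x_1x_2+p_{11}x_1^2+\tau_1x_1+\tau_2x_2+\tau_0$ with $p_{12},p_{11}\in K$, $\tau_i\in R$; $B$ is a free left $R$-module with basis $\{x_1^ax_2^b\}_{a,b\ge0}$; and $x_1R+x_2R\subseteq Rx_1+Rx_2+R$. The maps $\sigma_{ij},\delta_i$ are defined by $x_ir=\sigma_{i1}(r)x_1+\sigma_{i2}(r)x_2+\delta_i(r)$. It is graded if all its relations are homogeneous with $\deg x_1=\deg x_2=1$. A ring $A$ is a skew PBW extension of $R$ in $x_1,\dots,x_n$ if $R\subseteq A$; $A$ is a free left $R$-module with basis the monomials $x_1^{\alpha_1}\cdots x_n^{\alpha_n}$; for each $i$ and $r\ne0$ there is $c_{i,r}\ne0$ in $R$ with $x_ir-c_{i,r}x_i\in R$; for all $i,j$ there is $c_{i,j}\in R\setminus\{0\}$ with $x_jx_i-c_{i,j}x_ix_j\in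 R+Rx_1+\cdots+Rx_n$. Then $x_ir=\sigma_i(r)x_i+\delta_i(r)$ with $\sigma_i$ an injective endomorphism and $\delta_i$ a $\sigma_i$-derivation. It is bijective if all $\sigma_i$ are bijective and all $c_{i,j}$ invertible. A graded skew PBW extension is a bijective skew PBW extension of an $\mathbb N$-graded $R$ such that each $\sigma_i$ is graded, $\delta_i(R_m)\subseteq R_{m+1}$, and $x_jx_i-c_{i,j}x_ix_j\in R_2+R_1x_1+\cdots+R_1x_n$ with $c_{i,j}\in R_0$. *)

(* Defs.v *)
From HB Require Import structures.
From mathcomp Require Import all_boot all_order all_algebra.
Set Implicit Arguments. Unset Strict Implicit. Unset Printing Implicit Defensive.
Import GRing.Theory.
Local Open Scope ring_scope.

Section Defs.
Variables (K : fieldType) (A : algType K).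

Definition is_subalg (R : {pred A}) : Prop :=
  [/\ forall k : K, k%:A \in R,
      forall a b, a \in R -> b \in R -> a + b \in R,
      forall a b, a \in R -> b \in R -> a * b \in R &
      forall (k : K) a, a \in R -> k *: a \in R].

Definition is_grading (R : {pred A}) (Rg : nat -> {pred A}) : Prop :=
  (forall m, {subset Rg m <= R}) /\
  (forall m, 0 \in Rg m) /\
  (forall m a b, a \in Rg m -> b \in Rg m -> a + b \in Rg m) /\
  (forall m (k : K) a, a \in Rg m -> k *: a \in Rg m) /\
  (forall m n a b, a \in Rg m -> b \in Rg n -> a * b \in Rg (m + n)) /\
  (forall r, r \in R -> exists N (f : nat -> A),
       (forall m, (m < N)%N -> f m \in Rg m) /\ r = \sum_(m < N) f m) /\
  (forall N (f : nat -> A), (forall m, (m < N)%N -> f m \in Rg m) ->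
       \sum_(m < N) f m = 0 -> forall m, (m < N)%N -> f m = 0).

Definition mono n (x : 'I_n -> A) (al : 'I_n -> nat) : A :=
  \prod_(i < n) x i ^+ al i.

Definition left_free_basis n (R : {pred A}) (x : 'I_n -> A) : Prop :=
  (forall y : A, exists N (c : {ffun 'I_n -> 'I_N} -> A),
      (forall al, c al \in R) /\
      y = \sum_(al : {ffun 'I_n -> 'I_N}) c al * mono x (fun i => nat_of_ord (al i))) /\
  (forall N (c : {ffun 'I_n -> 'I_N} -> A), (forall al, c al \in R) ->
      \sum_(al : {ffun 'I_n -> 'I_N}) c al * mono x (fun i => nat_of_ord (al i)) = 0 ->
      forall al, c al = 0).

Definition lin_span n (R0 R1 : {pred A}) (x : 'I_n -> A) (y : A) : Prop :=
  exists (r0 : A) (r : 'I_n -> A),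
    [/\ r0 \in R0, forall i, r i \in R1 & y = r0 + \sum_(i < n) r i * x i].

Definition xpair (x1 x2 : A) : 'I_2 -> A :=
  fun i => if nat_of_ord i == 0%N then x1 else x2.

Definition skew_PBW n (R : {pred A}) (x : 'I_n -> A) : Prop :=
  [/\ left_free_basis R x,
      forall i r, r \in R -> r != 0 ->
        exists c, [/\ c \in R, c != 0 & x i * r - c * x i \in R] &
      forall i j, exists c,
        [/\ c \in R, c != 0 & lin_span R R x (x j * x i - c * x i * x j)]].

(* graded skew PBW extension of the N-graded R (grading Rg) in x:
   a bijective skew PBW extension (sigma_i bijective, c_{i,j} invertible in R)
   with sigma_i graded, delta_i(R_m) <= R_{m+1},
   x_j x_i - c_{i,j} x_i x_j in R_2 + R_1 x_1 + ... + R_1 x_n, c_{i,j} in R_0. *)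
Definition graded_skew_PBW n (R : {pred A}) (Rg : nat -> {pred A})
    (x : 'I_n -> A) : Prop :=
  is_grading R Rg /\
  left_free_basis R x /\
  (forall i r, r \in R -> r != 0 ->
     exists c, [/\ c \in R, c != 0 & x i * r - c * x i \in R]) /\
  (exists (sigma delta : 'I_n -> A -> A),
     (forall i r, r \in R ->
        [/\ sigma i r \in R, delta i r \in R & x i * r = sigma i r * x i + delta i r]) /\
     (forall i, {in R &, injective (sigma i)}) /\
     (forall i s, s \in R -> exists2 r, r \in R & sigma i r = s) /\
     (forall i m r, r \in Rg m -> sigma i r \in Rg m) /\
     (forall i m r, r \in Rg m -> delta i r \in Rg m.+1)) /\
  (exists c : 'I_n -> 'I_n -> A, forall i j,
     [/\ c i j \in R, c i j != 0,
         exists2 d, d \in R & c i j * d = 1 /\ d * c i j = 1,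
         lin_span R R x (x j * x i - c i j * x i * x j) &
         c i j \in Rg 0 /\ lin_span (Rg 2) (Rg 1) x (x j * x i - c i j * x i * x j)]).

Definition right_double_Ore (R : {pred A}) (x1 x2 : A) (p12 p11 : K)
    (t1 t2 t0 : A) (s11 s12 s21 s22 d1 d2 : A -> A) : Prop :=
  is_subalg R /\
  [/\ t1 \in R, t2 \in R & t0 \in R] /\
  x2 * x1 = p12 *: (x1 * x2) + p11 *: (x1 * x1) + t1 * x1 + t2 * x2 + t0 /\
  left_free_basis R (xpair x1 x2) /\
  (forall r, r \in R ->
     [/\ s11 r \in R, s12 r \in R, s21 r \in R & s22 r \in R] /\
     [/\ d1 r \in R, d2 r \in R,
         x1 * r = s11 r * x1 + s12 r * x2 + d1 r &
         x2 * r = s21 r * x1 + s22 r * x2 + d2 r]).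

(* graded: all relations homogeneous with deg x1 = deg x2 = 1 *)
Definition graded_right_double_Ore (R : {pred A}) (Rg : nat -> {pred A})
    (x1 x2 : A) (p12 p11 : K) (t1 t2 t0 : A) (s11 s12 s21 s22 d1 d2 : A -> A)
    : Prop :=
  right_double_Ore R x1 x2 p12 p11 t1 t2 t0 s11 s12 s21 s22 d1 d2 /\
  [/\ t1 \in Rg 1, t2 \in Rg 1 & t0 \in Rg 2] /\
  (forall m r, r \in Rg m ->
     [/\ s11 r \in Rg m, s12 r \in Rg m, s21 r \in Rg m & s22 r \in Rg m] /\
     d1 r \in Rg m.+1 /\ d2 r \in Rg m.+1).

Definition alg_aut_on (R : {pred A}) (f : A -> A) : Prop :=
  (forall r, r \in R -> f r \in R) /\
  {in R &, injective f} /\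
  (forall s, s \in R -> exists2 r, r \in R & f r = s) /\
  f 1 = 1 /\
  {in R &, forall a b, f (a + b) = f a + f b} /\
  {in R &, forall a b, f (a * b) = f a * f b} /\
  (forall (k : K) r, r \in R -> f (k *: r) = k *: f r).

End Defs.

(* Main.v *)
Require Import Defs.
From HB Require Import structures.
From mathcomp Require Import all_boot all_order all_algebra.
Import GRing.Theory.
Local Open Scope ring_scope.

Lemma one_Rg0 (K : fieldType) (A : algType K) (R : {pred A}) (Rg : nat -> {pred A}) :
  is_subalg R -> is_grading R Rg -> 1 \in Rg 0%N.
Proof.
move=> [HK _ _ _] [Hs [H0 [Hadd [Hsc [Hmul [Hdec Huniq]]]]]].
have R1 : (1 : A) \in R by rewrite -(scale1r (1 : A)); apply: HK.
have [N [f [Hf Hsum]]] := Hdec _ R1.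
have Nneq : (0 < N)%N.
  case: N f Hf Hsum => // f Hf; rewrite big_ord0 => /eqP; by rewrite oner_eq0.
have Hopp : forall m a, a \in Rg m -> - a \in Rg m.
  by move=> m a Ha; rewrite -scaleN1r; apply: Hsc.
have key : forall n a, a \in Rg n -> f 0%N * a = a.
  move=> n a Ha.
  pose g k := if (n <= k)%N then (if k == n then a else 0) - f (k - n)%N * a else 0.
  have Hg : forall k, (k < n + N)%N -> g k \in Rg k.
    move=> k Hk; rewrite /g; case: leqP => Hnk //.
    apply: Hadd; first by case: eqP => [->|]. 
    apply: Hopp; rewrite -{2}(subnK Hnk); apply: Hmul => //.
    apply: Hf; rewrite ltn_subLR //.
  have Hs0 : \sum_(k < n + N) g k = 0.
    rewrite -(big_mkord xpredT g) (@big_cat_nat _ _ _ n 0 (n + N)) ?leq_addr // /=.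
    rewrite big1_seq; last first.
      move=> k /andP [_]; rewrite mem_index_iota => /andP [_ Hk].
      by rewrite /g leqNgt Hk.
    rewrite add0r -{1}(add0n n) big_addn addKn.
    idtac.
    have gE : forall i, g (i + n)%N = (if i == 0%N then a else 0) - f i * a.
      move=> i; rewrite /g leq_addl addnK; congr (_ - _).
      by have := eqn_add2r n i 0; rewrite add0n => ->.
    under eq_bigr => k _ do rewrite gE.
    rewrite sumrB !big_mkord -mulr_suml -Hsum mul1r.
    case: N Nneq {Hf Hsum Hg} => // N' _.
    rewrite big_ord_recl /= big1 ?addr0 ?subrr // => i _.
  have Hn : (n < n + N)%N by rewrite -{1}(addn0 n) ltn_add2l.
  have := Huniq _ _ Hg Hs0 n Hn. rewrite /g leqnn eqxx subnn.
  by move/eqP; rewrite subr_eq0 => /eqP <-.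
have -> : (1 : A) = f 0%N.
  transitivity (f 0%N * 1); last by rewrite mulr1.
  rewrite {2}Hsum mulr_sumr {1}Hsum; apply: eq_bigr => i _.
  by symmetry; apply: (key i); apply: Hf.
by apply: Hf.
Qed.

Lemma aut0 (K : fieldType) (A : algType K) (R : {pred A}) (f : A -> A) :
  is_subalg R -> alg_aut_on R f -> f 0 = 0 /\ (0 : A) \in R.
Proof.
move=> [HK _ _ _] [_ [_ [_ [_ [Hadd _]]]]].
have R0 : (0 : A) \in R by rewrite -(scale0r (1 : A)); apply: HK.
split=> //; have := Hadd 0 0 R0 R0; rewrite addr0.
by move/(congr1 (fun z => z - f 0)); rewrite subrr addrK.
Qed.

Theorem theorem3p5 (K : fieldType) (A : algType K) (R : {pred A})
    (Rg : nat -> {pred A}) (x1 x2 : A) (p12 p11 : K) (t1 t2 t0 : A)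
    (s11 s12 s21 s22 d1 d2 : A -> A) :
  is_subalg R -> is_grading R Rg ->
  graded_right_double_Ore R Rg x1 x2 p12 p11 t1 t2 t0 s11 s12 s21 s22 d1 d2 ->
  p11 = 0 -> p12 != 0 ->
  (forall r, r \in R -> s12 r = 0 /\ s21 r = 0) ->
  alg_aut_on R s11 -> alg_aut_on R s22 ->
  graded_skew_PBW R Rg (xpair x1 x2).
Proof.
move=> Hsub Hgr Hore Hp11 Hp12 Hs Ha11 Ha22.
have G1 := @one_Rg0 _ _ _ _ Hsub Hgr.
have [s11_0 R0] := @aut0 _ _ _ _ Hsub Ha11.
have [s22_0 _] := @aut0 _ _ _ _ Hsub Ha22.
move: (Hsub) => [HK HaddR HmulR HscR].
move: (Hgr) => [Hsg [H0 [Hadd [Hsc _]]]].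
move: Hore => [[_ [[Ht1 Ht2 Ht0] [Hrel [Hfree Hmaps]]]] [[Gt1 Gt2 Gt0] Gmaps]].
move: Ha11 => [S11R [S11inj [S11surj _]]].
move: Ha22 => [S22R [S22inj [S22surj _]]].
pose sigma (i : 'I_2) := if nat_of_ord i == 0%N then s11 else s22.
pose delta (i : 'I_2) := if nat_of_ord i == 0%N then d1 else d2.
have Hx : forall i r, r \in R ->
    [/\ sigma i r \in R, delta i r \in R & xpair x1 x2 i * r = sigma i r * xpair x1 x2 i + delta i r].
  move=> [[|[|k]] Hi] r Hr //=; rewrite /sigma /delta /xpair /=;
  have [[? ? ? ?] [? ? E1 E2]] := Hmaps r Hr; have [z1 z2] := Hs r Hr.
  - by split=> //; rewrite E1 z1 mul0r addr0.
  - by split=> //; rewrite E2 z2 mul0r add0r.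
have Hinj : forall i, {in R &, injective (sigma i)}.
  by move=> [[|[|k]] Hi] //=.
split=> //; split=> //; split.
  move=> i r Hr Hr0; have [? ? E] := Hx i r Hr.
  exists (sigma i r); split=> //.
    apply/negP => /eqP E0; move/negP: Hr0; apply; apply/eqP.
    apply: (Hinj i) => //; rewrite E0 /sigma; by case: (_ == _).
  by rewrite E addrAC subrr add0r.
split.
  exists sigma, delta; split=> //; split=> //; split.
    by move=> [[|[|k]] Hi] //=.
  split.
    move=> [[|[|k]] Hi] m r Hr //=; by have [[? ? ? ?] _] := Gmaps m r Hr.
  move=> [[|[|k]] Hi] m r Hr //=; by have [_ [? ?]] := Gmaps m r Hr.
have Hopp : forall m a, a \in Rg m -> - a \in Rg m.
  by move=> m a Ha; rewrite -scaleN1r; apply: Hsc.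
have GR : forall y, lin_span (Rg 2) (Rg 1) (xpair x1 x2) y -> lin_span R R (xpair x1 x2) y.
  move=> y [r0 [r [Hr0 Hr E]]]; exists r0, r; split=> //.
    exact: (Hsg 2%N).
  by move=> i; apply: (Hsg 1%N).
have Hunit : forall k : K, k != 0 -> [/\ k%:A \in R, k%:A != 0 :> A,
    exists2 d, d \in R & k%:A * d = 1 /\ d * k%:A = 1 & k%:A \in Rg 0%N].
  move=> k Hk; split=> //.
  - by rewrite scaler_eq0 negb_or Hk oner_neq0.
  - exists (k^-1)%:A => //; rewrite -!scalerAl -!scalerAr !mul1r !scalerA.
    by rewrite mulfV // mulVf // scale1r.
  - by apply: Hsc.
pose c (i j : 'I_2) : A := if (nat_of_ord i == 0%N) && (nat_of_ord j == 1%N) then p12%:A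
  else if (nat_of_ord i == 1%N) && (nat_of_ord j == 0%N) then (p12^-1)%:A else 1.
exists c => i j.
have Hc : [/\ c i j \in R, c i j != 0,
         exists2 d, d \in R & c i j * d = 1 /\ d * c i j = 1 & c i j \in Rg 0%N].
  rewrite /c; case: (_ && _); first exact: Hunit.
  case: (_ && _); first by apply: Hunit; rewrite invr_eq0.
  by have := Hunit 1 (oner_neq0 _); rewrite scale1r.
suff L : lin_span (Rg 2) (Rg 1) (xpair x1 x2)
   (xpair x1 x2 j * xpair x1 x2 i - c i j * xpair x1 x2 i * xpair x1 x2 j).
  by case: Hc => ? ? ? ?; split=> //; apply: GR.
have Z : lin_span (Rg 2) (Rg 1) (xpair x1 x2) 0.
  exists 0, (fun _ => 0); split=> //; by rewrite big1 ?add0r // => ii _; rewrite mul0r.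
clear Hc; move: i j => [[|[|k]] Hi] [[|[|l]] Hj] //; rewrite /c /xpair /=.
all: try by rewrite mul1r subrr.
- exists t0, (fun i : 'I_2 => if nat_of_ord i == 0%N then t1 else t2); split=> //.
    by move=> [[|[|k]] Hk] //=.
  rewrite big_ord_recl big_ord1 /= Hrel Hp11 scale0r addr0 mulr_algl -scalerAl.
  rewrite [LHS]addrC !addrA addNr add0r.
  by rewrite [LHS]addrC addrA.
- exists (- (p12^-1 *: t0)), (fun i : 'I_2 => - (p12^-1 *: if nat_of_ord i == 0%N then t1 else t2)); split.
  + by apply: Hopp; apply: Hsc.
  + by move=> [[|[|k]] Hk] //=; apply: Hopp; apply: Hsc.
  rewrite big_ord_recl big_ord1 /= -mulrA mulr_algl Hrel Hp11 scale0r addr0.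
  rewrite !scalerDr scalerA mulVf // scale1r !scalerAl !mulNr.
  rewrite !opprD -!addrA addNKr.
  by rewrite [RHS]addrC addrA.
Qed.
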